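(* Let $n\ge 2$, let $\lambda_1\ge\lambda_2\ge\dots\ge\lambda_n$ be real numbers, and let $w_1,\dots,w_n$ be non-negative real numbers with $\sum_{i=1}^n w_i=1$. Let $\mu_1\ge\dots\ge\mu_{n-1}$ be the roots (which are all real) of the degree-$(n-1)$ polynomial $$p(x)=\sum_{i=1}^n w_i\prod_{j\ne i}(x-\lambda_j).$$ Set $U_\ell:=\sum_{i=\ell}^n w_i$ and $L_{r+1}:=\sum_{i=1}^{r+1}w_i$. Then for all integers $1\le \ell\le r\le n-1$ such that $U_\ell\neq 0$ and $L_{r+1}\neq 0$, $$\sum_{j=\ell}^r\lambda_{j+1}+\sum_{j=\ell}^r\frac{w_{j+1}}{L_{r+1}}(\lambda_\ell-\lambda_{j+1})\;\le\;\sum_{j=\ell}^r\mu_j\;\le\;\sum_{j=\ell}^r\lambda_j-\sum_{j=\ell}^r\frac{w_j}{U_\ell}(\lambda_j-\lambda_{r+1}).$$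
   Context: Roots are counted with multiplicity and listed in non-increasing order. *)

(* Defs.v *)
(* Indices are 1-based: lam, w, mu : nat -> R, only the
   values at 1..n (resp. 1..n-1) matter. *)
From mathcomp Require Import all_boot all_order all_algebra.
Set Implicit Arguments. Unset Strict Implicit. Unset Printing Implicit Defensive.
Import Order.TTheory GRing.Theory Num.Theory.
Local Open Scope ring_scope.

Definition interlace_poly (R : nzRingType) (n : nat) (lam w : nat -> R) : {poly R} :=
  \sum_(1 <= i < n.+1)
     w i *: \prod_(1 <= j < n.+1 | j != i) ('X - (lam j)%:P).

(* Main.v *)
Require Import Defs.
From mathcomp Require Import all_boot all_order all_algebra.
From mathcomp Require Import reals.
From mathcomp Require Import ring lra zify.
Set Implicit Arguments. Unset Strict Implicit. Unset Printing Implicit Defensive.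
Import Order.TTheory GRing.Theory Num.Theory.
Local Open Scope ring_scope.

Section Theory.
Variable R : rcfType.
Implicit Types (d e : seq (R * R)) (t : R).

Definition lams d := map fst d.
Fixpoint Pr d : {poly R} := match d with
 | [::] => 0
 | x :: d' => ('X - x.1%:P) * Pr d' + x.2 *: \prod_(z <- lams d') ('X - z%:P) end.
Definition sw d := \sum_(x <- d) x.2.
Definition fv d t := \sum_(x <- d) x.2 / (t - x.1).
Definition cgt t (s : seq R) := count (fun x => t < x) s.
Definition cge t (s : seq R) := count (fun x => t <= x) s.

Lemma Pr_swap x y d : Pr (x :: y :: d) = Pr (y :: x :: d).
Proof.
rewrite /= /lams /= !big_cons -!mul_polyC.
set Q := \prod_(_ <- _) _. ring.
Qed.

Lemma Pr_rem x e : x \in e -> Pr e = Pr (x :: rem x e).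
Proof.
elim: e => [//|y e IH]; rewrite inE /=.
case: eqP => [->|nxy] /= xe; first by rewrite eqxx.
have ->: (y == x) = false by apply/eqP => E; apply: nxy; rewrite E.
have pe : perm_eq (lams e) (lams (x :: rem x e)) by apply: perm_map; apply: perm_to_rem.
transitivity (Pr (y :: x :: rem x e)); last by rewrite Pr_swap.
have -> : Pr (y :: x :: rem x e) = ('X - y.1%:P) * Pr (x :: rem x e)
   + y.2 *: \prod_(z <- lams (x :: rem x e)) ('X - z%:P) by [].
by rewrite -IH // (perm_big _ pe).
Qed.

Lemma Pr_perm d e : perm_eq d e -> Pr d = Pr e.
Proof.
elim: d e => [|x d IH] e pde.
  by move: (perm_size pde); case: e pde.
have xe : x \in e by rewrite -(perm_mem pde) mem_head.
rewrite (Pr_rem xe) /=.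
have pde' : perm_eq d (rem x e).
  by rewrite -(perm_cons x); apply: (perm_trans pde); apply: perm_to_rem.
rewrite (IH _ pde') (perm_big _ (perm_map fst pde')) //.
Qed.

Lemma sw_perm d e : perm_eq d e -> sw d = sw e.
Proof. by move=> p; rewrite /sw (perm_big _ p). Qed.

Lemma fv_perm d e t : perm_eq d e -> fv d t = fv e t.
Proof. by move=> p; rewrite /fv (perm_big _ p). Qed.

Lemma Pr_eval d t : t \notin lams d ->
  (Pr d).[t] = (\prod_(z <- lams d) (t - z)) * fv d t.
Proof.
elim: d => [|x d IH]; first by rewrite /= horner0 /fv !big_nil mulr0.
rewrite /= inE negb_or => /andP[tx td].
rewrite hornerD hornerM hornerZ hornerXsubC horner_prod.
under eq_bigr => i _ do rewrite hornerXsubC.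
rewrite IH //.
rewrite /fv big_cons big_cons -/(fv d t).
have : t - x.1 != 0 by rewrite subr_eq0.
move=> h. set Q := \prod_(_ <- _) _. field. done.
Qed.

Lemma sign_prod t s : t \notin s -> 0 < (-1) ^+ (cgt t s) * \prod_(z <- s) (t - z).
Proof.
elim: s => [|z s IH]; first by rewrite big_nil /= mulr1 expr0.
rewrite inE negb_or => /andP[tz ts]; rewrite big_cons /cgt /=.
have := IH ts; rewrite /cgt.
case: (ltP t z) => h /=.
  rewrite exprS.
  set c := count _ s; set Q := \prod_(_ <- s) _.
  move=> h2.
  have ->: -1 * (-1) ^+ c * ((t - z) * Q) = (z - t) * ((-1) ^+ c * Q) by ring.
  by rewrite mulr_gt0 // subr_gt0.
rewrite add0n.
have: 0 < t - z by rewrite subr_gt0 lt_neqAle h eq_sym tz.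
move=> h1 h2.
rewrite mulrCA mulr_gt0 //.
Qed.


Lemma Pr_coef d : (size (Pr d) <= size d)%N /\ (Pr d)`_(size d).-1 = sw d.
Proof.
elim: d => [|x d [IH1 IH2]]; first by rewrite /= size_poly0 coef0 /sw big_nil.
have hs : size (\prod_(z <- lams d) ('X - z%:P)) = (size d).+1 by rewrite size_prod_XsubC size_map.
have hl : (\prod_(z <- lams d) ('X - z%:P))`_(size d) = 1.
  by have := monicP (monic_prod_XsubC (lams d) xpredT id); rewrite lead_coefE hs.
have h0 : (Pr d)`_(size d) = 0 by rewrite nth_default.
split.
  rewrite /= (leq_trans (size_add _ _)) // geq_max; apply/andP; split.
    apply: (leq_trans (size_polyMleq _ _)); rewrite size_XsubC /=.
    by case: (size (Pr d)) IH1.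
  by rewrite (leq_trans (size_scale_leq _ _)) // hs.
rewrite /= coefD coefZ hl mulr1 mulrBl coefB coefXM coefCM h0 mulr0 subr0.
rewrite /sw big_cons -/(sw d) addrC; congr (_ + _).
case: d IH1 IH2 {hs hl h0} => [|y d] IH1 IH2 /=; first by rewrite /sw big_nil.
exact: IH2.
Qed.

Lemma Pr_coef2 d : (2 <= size d)%N ->
  (Pr d)`_(size d).-2 = - (sw d * \sum_(z <- lams d) z - \sum_(x <- d) x.2 * x.1).
Proof.
elim: d => [//|x d IH] h.
have [_ hP] := Pr_coef d.
have hpn : (\prod_(z <- lams d) ('X - z%:P))`_(size d).-1 = - \sum_(z <- lams d) z.
  by rewrite -(size_map fst) coefPn_prod_XsubC // size_map -lt0n; case: (d) h.
rewrite /= coefD coefZ mulrBl coefB coefXM coefCM hP hpn.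
rewrite /sw /lams /= !big_cons -/(sw d) -/(lams d).
case: d IH h hP hpn => [//|y d] IH h hP hpn.
case: d IH h hP hpn => [|z d] IH h hP hpn.
  rewrite /= /sw !big_cons !big_nil /=. ring.
rewrite /= IH //= /sw /lams /= !big_cons. ring.
Qed.


Definition Roots d mu := [/\ size mu = (size d).-1,
  Pr d = sw d *: \prod_(z <- mu) ('X - z%:P) &
  forall t, (cge t mu <= cge t (lams d))%N /\ (cgt t (lams d) <= (cgt t mu).+1)%N].

Lemma cgt_lt_cge t s : t \in s -> (cgt t s < cge t s)%N.
Proof.
elim: s => [//|z s IH]; rewrite inE /cgt /cge /= => /orP[/eqP <-|ts].
  rewrite ltxx lexx add0n add1n ltnS; apply: sub_count => x /=; exact: ltW.
rewrite -/(cgt t s) -/(cge t s) -addnS; apply: leq_add; last exact: IH.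
by case: ltP => // h; rewrite (ltW h).
Qed.

Lemma cgt_le_cge t s : (cgt t s <= cge t s)%N.
Proof. by apply: sub_count => x /=; exact: ltW. Qed.

Lemma cge_cgt t s : t \notin s -> cge t s = cgt t s.
Proof.
move=> ts; apply: eq_in_count => x xs /=.
by rewrite le_eqVlt; case: eqP => // E; move: ts; rewrite E xs.
Qed.

Lemma keyfact d mu t : 0 < sw d -> Roots d mu -> t \notin lams d ->
  [/\ (cgt t mu <= cgt t (lams d))%N, (cgt t (lams d) <= (cgt t mu).+1)%N &
   (0 < fv d t) = (cgt t mu == cgt t (lams d))].
Proof.
move=> s0 [_ hP hc] tl.
have [h1 h2] := hc t.
have NK : (cgt t mu <= cgt t (lams d))%N.
  by rewrite -(cge_cgt tl) (leq_trans (cgt_le_cge _ _)).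
split => //.
have E : sw d * \prod_(z <- mu) (t - z) = \prod_(z <- lams d) (t - z) * fv d t.
  rewrite -Pr_eval // {1}hP hornerZ horner_prod; congr (_ * _).
  by apply: eq_bigr => i _; rewrite hornerXsubC.
set Pm := \prod_(_ <- mu) _ in E; set Pl := \prod_(_ <- lams d) _ in E.
have hB := sign_prod tl. rewrite -/Pl in hB.
case: (boolP (t \in mu)) => tm.
  have Pm0 : Pm = 0.
    by apply/eqP; rewrite /Pm prodf_seq_eq0; apply/hasP; exists t => //=; rewrite subrr.
  have Pl0 : Pl != 0 by apply: contraTneq hB => ->; rewrite mulr0 ltxx.
  have f0 : fv d t = 0.
    by apply/eqP; move: E; rewrite Pm0 mulr0 => /esym/eqP; rewrite mulf_eq0 (negbTE Pl0).
  rewrite f0 ltxx; apply/esym/negbTE; rewrite neq_ltn; apply/orP; left.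
  apply: (leq_trans (cgt_lt_cge tm)); apply: (leq_trans h1); by rewrite cge_cgt.
have hA := sign_prod tm. rewrite -/Pm in hA.
set N := cgt t mu in NK h2 hA *; set K := cgt t (lams d) in NK h2 hB *.
have eqB : (-1) ^+ K * Pl * fv d t = sw d * ((-1) ^+ K * Pm).
  by rewrite -mulrA -E mulrCA.
case: (ltngtP N K) => [NKlt|NKgt|eNK]; last first.
  apply/idP; rewrite -(pmulr_rgt0 _ hB) eqB mulr_gt0 //.
  by rewrite -eNK.
  by move: NKgt; rewrite ltnNge NK.
have KN : K = N.+1 by apply/eqP; rewrite eqn_leq h2 NKlt.
move: eqB hB; rewrite KN exprS !mulN1r !mulNr mulrN => /eqP; rewrite eqr_opp => /eqP eqB hB.
have hb : 0 < (-1)^+N * Pl * fv d t by rewrite eqB mulr_gt0.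
rewrite oppr_gt0 in hB.
apply/negbTE; rewrite -leNgt.
by move: hb; rewrite nmulr_rgt0 // => /ltW.
Qed.


Lemma Roots_perm d e mu : perm_eq d e -> Roots d mu -> Roots e mu.
Proof.
move=> p [h1 h2 h3]; split.
- by rewrite h1 (perm_size p).
- by rewrite -(Pr_perm p) -(sw_perm p).
- move=> t; have [a b] := h3 t.
  have /permP pl := perm_map fst p.
  by rewrite /cge /cgt -!pl.
Qed.

Lemma fchoice (Q : nat -> R -> Prop) m :
  (forall k, (k < m)%N -> exists x, Q k x) ->
  exists s : seq R, size s = m /\ forall k, (k < m)%N -> Q k (nth 0 s k).
Proof.
elim: m => [|m IH] h; first by exists [::].
have [s [hs hq]] : exists s : seq R, size s = m /\ forall k, (k < m)%N -> Q k (nth 0 s k).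
  by apply: IH => k km; apply: h; apply: ltnW.
have [x hx] := h m (ltnSn m).
exists (rcons s x); rewrite size_rcons hs; split => // k; rewrite ltnS leq_eqVlt nth_rcons hs.
by case/orP => [/eqP ->|km]; [rewrite ltnn eqxx | rewrite km; apply: hq].
Qed.

End Theory.

Lemma count_in_le (T : eqType) (P Q : pred T) s :
  (forall x, x \in s -> P x -> Q x) -> (count P s <= count Q s)%N.
Proof.
elim: s => [//|x s IH] h /=; apply: leq_add; last first.
  by apply: IH => y ys; apply: h; rewrite inE ys orbT.
by case: (boolP (P x)) => // /(h x (mem_head _ _)) ->.
Qed.

Lemma count_iota_cut (P : pred nat) b k m : (k <= m)%N ->
  (forall i, (b <= i < b + k)%N -> P i) -> (forall i, (b + k <= i < b + m)%N -> ~~ P i) ->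
  count P (iota b m) = k.
Proof.
move=> km h1 h2; rewrite -(subnKC km) iotaD count_cat.
have -> : count P (iota b k) = k.
  rewrite -[in RHS](size_iota b k) -count_predT; apply: eq_in_count => i.
  by rewrite mem_iota => /h1 ->.
rewrite (@eq_in_count _ _ pred0) ?count_pred0 ?addn0 // => i.
rewrite mem_iota => /andP[i1 i2]; apply/negbTE; apply: h2; rewrite i1 /=.
by move: i2; rewrite -addnA subnKC.
Qed.


Section Generic.
Variable R : rcfType.
Implicit Types (d e : seq (R * R)) (t : R).

Lemma sw_gt0 d : (0 < size d)%N -> (forall x, x \in d -> 0 < x.2) -> 0 < sw d.
Proof.
case: d => [//|x d] _ ep; rewrite /sw big_cons.
rewrite ltr_pwDl ?ep ?mem_head // big_seq; apply: sumr_ge0 => i id.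
by apply: ltW; apply: ep; rewrite inE id orbT.
Qed.

Lemma generic d : (0 < size d)%N -> uniq (lams d) -> (forall x, x \in d -> 0 < x.2) ->
  exists mu, Roots d mu.
Proof.
move=> n0 ud wpos.
pose le2 := fun x y : R * R => y.1 <= x.1.
pose e := sort le2 d.
have pde : perm_eq e d by rewrite perm_sort perm_refl.
suff [mu hmu] : exists mu, Roots e mu by exists mu; apply: Roots_perm hmu.
have tot : total le2 by move=> x y; rewrite /le2 le_total.
have tr : transitive le2 by move=> x y z; rewrite /le2 => h1 h2; apply: le_trans h2 h1.
have srt : sorted le2 e := sort_sorted tot d.
have ue : uniq (lams e) by rewrite (perm_uniq (perm_map fst pde)).
have epos : forall x, x \in e -> 0 < x.2 by move=> x; rewrite (perm_mem pde); apply wpos.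
have ne : size e = size d by rewrite (perm_size pde).
clearbody e; clear pde ud wpos.
set n := size e.
pose a k := (nth (0,0) e k).1.
pose w k := (nth (0,0) e k).2.
have la : lams e = mkseq a n.
  by rewrite /lams -{1}(mkseq_nth (0,0) e) /mkseq -map_comp.
have nla : forall k, (k < n)%N -> nth 0 (lams e) k = a k.
  by move=> k kn; rewrite /lams (nth_map (0,0)).
have dec : forall i j, (i < j < n)%N -> a j < a i.
  move=> i j /andP[ij jn].
  have hle : a j <= a i.
    by apply: (sorted_ltn_nth tr (0,0) srt) => //; rewrite inE /= (ltn_trans ij jn).
  rewrite lt_neqAle hle andbT.
  have := @nth_uniq _ 0 (lams e) i j; rewrite size_map => /(_ (ltn_trans ij jn) jn ue).
  rewrite (ltn_eqF ij) nla ?(ltn_trans ij jn) // nla //.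
  by rewrite eq_sym => ->.
have cnt : forall k, (k < n)%N -> cgt (a k) (lams e) = k.
  move=> k kn; rewrite la /cgt /mkseq count_map.
  apply: (@count_iota_cut _ 0) => [|i|i]; first exact: ltnW.
    by rewrite add0n /= => ik; apply: dec; rewrite ik.
  rewrite !add0n /= -leNgt => /andP[]; rewrite leq_eqVlt => /orP[/eqP -> _//|ki iN].
  by apply: ltW; apply: dec; rewrite ki.
have val : forall k, (k < n)%N ->
    (Pr e).[a k] = w k * \prod_(z <- lams (rem (nth (0,0) e k) e)) (a k - z).
  move=> k kn; have xe : nth (0,0) e k \in e by apply: mem_nth.
  rewrite (Pr_rem xe) /= hornerD hornerM hornerXsubC subrr mul0r add0r hornerZ horner_prod.
  by congr (_ * _); apply: eq_bigr => i _; rewrite hornerXsubC.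
have sgn : forall k, (k < n)%N -> 0 < (-1) ^+ k * (Pr e).[a k].
  move=> k kn; rewrite val //.
  have xe : nth (0,0) e k \in e by apply: mem_nth.
  have pl : perm_eq (lams e) (a k :: lams (rem (nth (0,0) e k) e)).
    exact: (perm_map fst (perm_to_rem xe)).
  have nin : a k \notin lams (rem (nth (0,0) e k) e).
    by move: ue; rewrite (perm_uniq pl) /= => /andP[].
  have hc : cgt (a k) (lams (rem (nth (0,0) e k) e)) = k.
    by have := cnt k kn; rewrite /cgt (permP pl) /= ltxx add0n.
  have := sign_prod nin; rewrite hc => h.
  by rewrite mulrCA mulr_gt0 //; apply: epos.
have n0' : (0 < n)%N by rewrite /n ne.
have decle : forall i j, (i <= j < n)%N -> a j <= a i.
  move=> i j /andP[]; rewrite leq_eqVlt => /orP[/eqP -> //|ij jn].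
  by apply: ltW; apply: dec; rewrite ij.
have ex : forall k, (k < n.-1)%N -> exists x, (a k.+1 < x < a k) && root (Pr e) x.
  move=> k kn; have k1n : (k.+1 < n)%N by rewrite -ltn_predRL.
  have kn' : (k < n)%N by apply: ltn_trans k1n.
  pose Q := (-1) ^+ k *: Pr e.
  have hq1 : Q.[a k.+1] < 0.
    have := sgn _ k1n; rewrite exprS mulN1r mulNr oppr_gt0.
    by rewrite /Q hornerZ.
  have hq2 : 0 < Q.[a k] by rewrite /Q hornerZ; apply: sgn.
  have h1 : (k < k.+1 < n)%N by rewrite ltnSn k1n.
  have h2 : Q.[a k.+1] <= 0 <= Q.[a k] by rewrite (ltW hq1) (ltW hq2).
  have [x /andP[x1 x2] rx] := @poly_ivt R Q (a k.+1) (a k) (ltW (dec _ _ h1)) h2.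
  have rP : root (Pr e) x.
    by move: rx; rewrite /root /Q hornerZ mulf_eq0 signr_eq0.
  exists x; rewrite rP andbT lt_neqAle x1 lt_neqAle x2 !andbT.
  apply/andP; split; apply/eqP => E.
    by move: hq1; rewrite E; move: rx => /rootP ->; rewrite ltxx.
  by move: hq2; rewrite -E; move: rx => /rootP ->; rewrite ltxx.
have [mu [smu hmu]] := @fchoice R (fun k x => (a k.+1 < x < a k) && root (Pr e) x) _ ex.
have hmu1 : forall k, (k < n.-1)%N -> a k.+1 < nth 0 mu k < a k.
  by move=> k /hmu /andP[].
have hmu2 : forall k, (k < n.-1)%N -> root (Pr e) (nth 0 mu k).
  by move=> k /hmu /andP[].
have sw0 : 0 < sw e by apply: sw_gt0.
have [hs1 hs2] := Pr_coef e.
have hsz : size (Pr e) = n.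
  apply/eqP; rewrite eqn_leq hs1 /=; rewrite -(prednK n0') ltnNge; apply/negP => h.
  by move: hs2; rewrite nth_default // => h0; move: sw0; rewrite -h0 ltxx.
have lt_mu : forall i j, (i < j < n.-1)%N -> nth 0 mu j < nth 0 mu i.
  move=> i j /andP[ij jn].
  have in_ : (i < n.-1)%N by apply: ltn_trans jn.
  have [_ h1] := andP (hmu1 _ jn); have [h2 _] := andP (hmu1 _ in_).
  apply: (lt_le_trans h1); apply: (le_trans _ (ltW h2)); apply: decle.
  by rewrite ij /= (leq_trans jn) // leq_pred.
exists mu; split => //.
  have := @all_roots_prod_XsubC _ (Pr e) mu.
  rewrite hsz smu (prednK n0') => /(_ erefl) -> //.
  - by rewrite lead_coefE hsz hs2.
  - by apply/(all_nthP 0) => i; rewrite smu => /hmu2.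
  - rewrite uniq_rootsE; apply/(uniqP 0) => i j; rewrite !inE smu => i_ j_ Eij.
    case: (ltngtP i j) => // hij.
      by move: (lt_mu i j); rewrite hij j_ Eij ltxx => /(_ isT).
    by move: (lt_mu j i); rewrite hij i_ Eij ltxx => /(_ isT).
move=> t.
have emu : mu = mkseq (nth 0 mu) n.-1 by rewrite -smu mkseq_nth.
split.
  rewrite /cge emu la /mkseq !count_map.
  apply: (@leq_trans (count (preim a (fun x => t <= x)) (iota 0 n.-1))).
    apply: count_in_le => k; rewrite mem_iota /= => kn h.
    by apply: (le_trans h); have [_ /ltW] := andP (hmu1 _ kn).
  rewrite -{2}(prednK n0') -addn1 iotaD count_cat; exact: leq_addr.
rewrite /cgt emu la /mkseq !count_map -{1}(prednK n0') /= -add1n iotaDl count_map.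
rewrite -[X in (_ <= X)%N]add1n; apply: leq_add; first by case: (t < a 0%N).
apply: count_in_le => k; rewrite mem_iota /= => kn h.
have [h' _] := andP (hmu1 _ kn); exact: lt_trans h h'.
Qed.
End Generic.

Section Exist.
Variable R : rcfType.
Implicit Types (d e : seq (R * R)) (t : R).

Lemma Roots_ext a d e mu : Roots d mu -> (0 < size d)%N ->
  Pr e = ('X - a%:P) * Pr d -> sw e = sw d -> lams e = a :: lams d -> Roots e (a :: mu).
Proof.
move=> [h1 h2 h3] d0 hP hs hl; split.
- by rewrite -(size_map fst e) -/(lams e) hl /= size_map h1 prednK.
- by rewrite hP h2 hs big_cons scalerAr.
- move=> t; have [c1 c2] := h3 t; rewrite hl /cge /cgt /=; split.
    by rewrite leq_add2l.
  by rewrite -addnS leq_add2l.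
Qed.

Lemma nonuniq d : ~~ uniq (lams d) -> exists x y r, perm_eq d (x :: y :: r) /\ x.1 = y.1.
Proof.
elim: d => [//|z d IH] /=; rewrite negb_and negbK => /orP[/mapP[y yd zy]|/IH].
  exists z, y, (rem y d); split => //; rewrite perm_cons; exact: perm_to_rem.
move=> [x [y [r [p xy]]]]; exists x, y, (z :: r); split => //.
apply: (perm_trans (y := z :: x :: y :: r)); first by rewrite perm_cons.
by rewrite -[z :: x :: y :: r]/([:: z] ++ [:: x; y] ++ r) perm_catCA.
Qed.

Lemma exists_roots n d : size d = n -> (forall x, x \in d -> 0 <= x.2) -> 0 < sw d ->
  exists mu, Roots d mu.
Proof.
elim: n d => [|n IH] d hsz hw hs.
  by move: hs; case: d hsz hw => // _ _; rewrite /sw big_nil ltxx.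
case: (boolP (has (fun x => x.2 == 0) d)) => [/hasP[x xd /eqP x0]|hnz].
  have p := perm_to_rem xd.
  have hsw : sw d = sw (rem x d) by rewrite (sw_perm p) /sw big_cons x0 add0r.
  have hs' : 0 < sw (rem x d) by rewrite -hsw.
  have [|||mu hmu] := IH (rem x d).
  - by rewrite size_rem // hsz.
  - by move=> y yd; apply: hw; apply: (mem_rem yd).
  - done.
  have p' : perm_eq (x :: rem x d) d by rewrite perm_sym.
  exists (x.1 :: mu); apply: (Roots_perm p'); apply: Roots_ext hmu _ _ _ _ => //.
  - by case: (rem x d) hs' => //; rewrite /sw big_nil ltxx.
  - by rewrite /= x0 scale0r addr0.
  - by rewrite /sw big_cons x0 add0r.
case: (boolP (uniq (lams d))) => [ud|/nonuniq [x [y [r [p xy]]]]].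
  apply: generic; first by rewrite hsz.
    done.
  move=> x xd; rewrite lt_neqAle hw // andbT eq_sym.
  by apply/negP => /eqP x0; move/hasP: hnz; apply; exists x => //; rewrite x0.
pose d' := (x.1, x.2 + y.2) :: r.
have hsw : sw d = sw d'.
  by rewrite (sw_perm p) /sw /d' !big_cons /= addrA.
have hw' : forall z, z \in d -> 0 <= z.2 := hw.
have [|||mu hmu] := IH d'.
- by move: (perm_size p); rewrite hsz /= => -[->].
- move=> z; rewrite inE => /orP[/eqP -> /=|zr]; last by apply: hw; rewrite (perm_mem p) !inE zr !orbT.
  by rewrite addr_ge0 // hw // (perm_mem p) !inE eqxx ?orbT.
- by rewrite -hsw.
have p' : perm_eq (x :: y :: r) d by rewrite perm_sym.
exists (x.1 :: mu); apply: (Roots_perm p'); apply: Roots_ext hmu _ _ _ _ => //.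
- by rewrite /= -xy /lams /= !big_cons -!mul_polyC; set Q := \prod_(_ <- _) _; ring.
- by rewrite -hsw (sw_perm p).
- by rewrite /lams /= -xy.
Qed.

End Exist.

Section Sorted.
Variable R : rcfType.
Implicit Types (d e : seq (R * R)) (t : R).

Lemma sum_roots d mu : 0 < sw d -> Roots d mu -> (2 <= size d)%N ->
  \sum_(z <- mu) z = \sum_(z <- lams d) z - (\sum_(x <- d) x.2 * x.1) / sw d.
Proof.
move=> s0 [h1 h2 _] d2.
have := Pr_coef2 d2; rewrite {1}h2 coefZ.
have -> : (size d).-2 = (size mu).-1 by rewrite h1.
rewrite coefPn_prod_XsubC; last by rewrite h1; case: (size d) d2 => [|[|k]].
move=> E; have sn : sw d != 0 by rewrite gt_eqF.
apply: (mulfI sn); rewrite mulrBr mulrCA divff // mulr1.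
by apply: oppr_inj; rewrite -mulrN E opprB.
Qed.

Definition geR := fun x y : R => y <= x.

Lemma sorted_ge_all x s : sorted geR (x :: s) -> all (fun y => y <= x) s.
Proof.
move=> h; have := order_path_min (fun a b c (h1 : geR b a) (h2 : geR a c) => le_trans h2 h1) h.
by [].
Qed.

Lemma A_gen (P : pred R) s i : (forall x y, x <= y -> P x -> P y) -> sorted geR s ->
  (i < size s)%N -> P (nth 0 s i) -> (i < count P s)%N.
Proof.
move=> mono; elim: s i => [//|x s IH] [|i] srt /=; first by move=> _ ->.
rewrite ltnS => iS Pi.
have sx := sorted_ge_all srt.
have Px : P x.
  apply: (mono _ _ _ Pi); move/allP: sx; apply; exact: mem_nth.
rewrite Px add1n ltnS; apply: IH => //; exact: (path_sorted srt).
Qed.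

Lemma B_gen (P : pred R) s i : (forall x y, x <= y -> P x -> P y) -> sorted geR s ->
  ~~ P (nth 0 s i) -> (count P s <= i)%N.
Proof.
move=> mono; elim: s i => [//|x s IH] [|i] srt /= nP.
  rewrite (negbTE nP) add0n leqn0 eqn0Ngt -has_count; apply/hasPn => y ys.
  apply/negP => Py; apply: (negP nP); apply: mono Py.
  by move/allP: (sorted_ge_all srt); apply.
rewrite -add1n leq_add ?leq_b1 //; apply: IH => //; exact: (path_sorted srt).
Qed.

Lemma sorted_interlace (ls mu : seq R) : size mu = (size ls).-1 ->
  (forall t, (cge t mu <= cge t ls)%N /\ (cgt t ls <= (cgt t mu).+1)%N) -> sorted geR ls ->
  forall k, (k < size mu)%N ->
  nth 0 ls k.+1 <= nth 0 (sort geR mu) k <= nth 0 ls k.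
Proof.
move=> hs hc sl k km.
have tot : total geR by move=> x y; rewrite /geR le_total.
have srt := sort_sorted tot mu.
have /permP pm : perm_eq (sort geR mu) mu by rewrite perm_sort perm_refl.
have ssz : size (sort geR mu) = size mu by rewrite size_sort.
set t := nth 0 (sort geR mu) k.
have kl : (k.+1 < size ls)%N by move: km; rewrite hs -ltn_predRL.
have [c1 c2] := hc t.
apply/andP; split; rewrite leNgt; apply/negP => h.
  have h1 : (k.+1 < cgt t ls)%N.
    by apply: (A_gen (P := fun x => t < x)) => // x y xy tx; apply: lt_le_trans xy.
  have h2 : (cgt t (sort geR mu) <= k)%N.
    by apply: (B_gen (P := fun x => t < x)) => //; [move=> x y xy tx; apply: lt_le_trans xy | rewrite ltxx].
  move: c2 h1 h2; rewrite /cgt pm => a b c; move: (leq_trans b a); rewrite ltnS => e.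
  by move: (leq_trans e c); rewrite ltnn.
have h1 : (k < cge t (sort geR mu))%N.
  by apply: (A_gen (P := fun x => t <= x)) => //; [move=> x y xy tx; apply: le_trans xy | rewrite ssz].
have h2 : (cge t ls <= k)%N.
  by apply: (B_gen (P := fun x => t <= x)) => //; [move=> x y xy tx; apply: le_trans xy | rewrite -ltNge].
move: c1 h1 h2; rewrite /cge pm => a b c.
by move: (leq_trans (leq_trans b a) c); rewrite ltnn.
Qed.

End Sorted.
Arguments geR {R}.

Section Bridge.
Variable R : rcfType.

Lemma bridge n (lam w : nat -> R) :
  Pr [seq (lam i, w i) | i <- rev (iota 1 n)] = interlace_poly n lam w.
Proof.
elim: n => [|n IH]; first by rewrite /interlace_poly big_geq.
have -> : iota 1 n.+1 = rcons (iota 1 n) n.+1.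
  by rewrite -cats1; have := iotaD 1 n 1; rewrite addn1 add1n => ->.
rewrite rev_rcons /= IH /interlace_poly [in RHS]big_nat_recr //=.
congr (_ + _).
  rewrite mulr_sumr; apply: eq_big_nat => i /andP[i1 i2].
  rewrite -scalerAr; congr (_ *: _).
  rewrite [in RHS]big_mkcond big_nat_recr //= -big_mkcond /= mulrC.
  by rewrite (_ : (n.+1 != i) = true) // neq_ltn i2 orbT.
congr (_ *: _).
rewrite [in RHS]big_mkcond big_nat_recr //= eqxx mulr1.
rewrite /lams -map_comp big_map big_rev.
rewrite /index_iota subn1 /=; apply: eq_big_seq => j; rewrite mem_iota => /andP[j1 j2].
by rewrite (_ : (j != n.+1) = true) // neq_ltn j2.
Qed.

End Bridge.

Section Final.
Variable R : rcfType.
Implicit Types (d e : seq (R * R)) (t : R).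

Lemma compare d e mu nu t : 0 < sw d -> 0 < sw e -> Roots d mu -> Roots e nu ->
  t \notin lams d -> t \notin lams e -> fv d t <= fv e t ->
  (cgt t mu + cgt t (lams e) <= cgt t nu + cgt t (lams d))%N.
Proof.
move=> sd se rd re td te fde.
have [a1 a2 a3] := keyfact sd rd td.
have [b1 b2 b3] := keyfact se re te.
case: (boolP (cgt t mu == cgt t (lams d))) => [/eqP E|NE].
  have : 0 < fv e t by apply: lt_le_trans fde; rewrite a3 E eqxx.
  rewrite b3 => /eqP ->; by rewrite E addnC.
have K : cgt t (lams d) = (cgt t mu).+1.
  by apply/eqP; rewrite eqn_leq a2 ltn_neqAle NE a1.
rewrite K addnS -addSn addnC leq_add2r; exact: b2.
Qed.

Lemma sorted_map_iota (lam : nat -> R) b m :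
  (forall i j, (b <= i)%N -> (i <= j)%N -> (j < b + m)%N -> lam j <= lam i) ->
  sorted geR (map lam (iota b m)).
Proof.
elim: m b => [//|m IH] b h /=.
case: m IH h => [//|m] IH h /=.
rewrite /geR h ?leqnn ?addnS ?ltnS ?leq_addr //=.
have := IH b.+1; rewrite /= => -> // i j bi ij jm.
apply: h => //; first exact: ltnW.
by move: jm; rewrite !addSn !addnS.
Qed.

Lemma cut_lemma (lam : nat -> R) b m c t :
  (forall i j, (b <= i)%N -> (i <= j)%N -> (j < b + m)%N -> lam j <= lam i) ->
  (b <= c)%N -> (c.+1 < b + m)%N -> lam c.+1 < t < lam c ->
  cgt t (map lam (iota b m)) = (c.+1 - b)%N /\ t \notin map lam (iota b m).
Proof.
move=> h bc cm /andP[t1 t2].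
have hi : forall i, (b <= i < b + m)%N -> ((i <= c)%N -> t < lam i) /\ ((c < i)%N -> lam i < t).
  move=> i /andP[bi im]; split => ic.
    by apply: (lt_le_trans t2); apply: h => //; apply: ltn_trans cm.
  by apply: (le_lt_trans _ t1); apply: h => //; apply: (leq_trans bc).
split.
  rewrite /cgt count_map; apply: count_iota_cut.
  - by rewrite leq_subLR -ltnS (leq_trans cm) // addnC.
  - move=> i; rewrite (subnKC (leq_trans bc (leqnSn c))).
    move=> /andP[bi ic].
    have hr : (b <= i < b + m)%N by rewrite bi /= (leq_trans ic) // ltnW.
    by have [+ _] := hi i hr; apply; rewrite -ltnS.
  - move=> i; rewrite (subnKC (leq_trans bc (leqnSn c))).
    move=> /andP[ci im].
    have hr : (b <= i < b + m)%N by rewrite im andbT (leq_trans bc) // ltnW.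
    by have [_ +] := hi i hr; rewrite /= -leNgt => hh; apply: ltW; apply: hh.
apply/mapP => -[i]; rewrite mem_iota => ir E.
have [h1 h2] := hi i ir; case: (leqP i c) => ic.
  by move: (h1 ic); rewrite E ltxx.
by move: (h2 ic); rewrite E ltxx.
Qed.

End Final.

Lemma ar1 k l r : (k < r.+1 - l)%N -> (l <= r)%N -> (k + l <= r)%N.
Proof. lia. Qed.

Lemma ar2 N N' k l : (0 < l)%N -> ((k + l).-1 < N)%N -> (N' <= k)%N ->
  (N + k.+1 <= N' + (k + l))%N -> False.
Proof. lia. Qed.

Lemma ar3 l r : (l <= r)%N -> (2 <= (r.+1 - l).+1)%N.
Proof. lia. Qed.

Lemma ar4 N N' k l : (0 < l)%N -> (k < N')%N -> (N <= (k + l).-1)%N ->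
  (N' + (k + l) <= N + k.+1)%N -> False.
Proof. lia. Qed.

Theorem main (R : rcfType) (n : nat) (lam w : nat -> R) :
  (2 <= n)%N ->
  (forall i j : nat, (1 <= i)%N -> (i <= j)%N -> (j <= n)%N -> lam j <= lam i) ->
  (forall i : nat, (1 <= i)%N -> (i <= n)%N -> 0 <= w i) ->
  \sum_(1 <= i < n.+1) w i = 1 ->
  exists mu : nat -> R,
    (forall i j : nat, (1 <= i)%N -> (i <= j)%N -> (j <= n.-1)%N -> mu j <= mu i) /\
    interlace_poly n lam w = \prod_(1 <= j < n) ('X - (mu j)%:P) /\
    (forall l r : nat, (1 <= l)%N -> (l <= r)%N -> (r <= n.-1)%N ->
       \sum_(l <= i < n.+1) w i != 0 ->
       \sum_(1 <= i < r.+2) w i != 0 ->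
       \sum_(l <= j < r.+1) lam j.+1
         + \sum_(l <= j < r.+1) w j.+1 / (\sum_(1 <= i < r.+2) w i) * (lam l - lam j.+1)
       <= \sum_(l <= j < r.+1) mu j
       /\
       \sum_(l <= j < r.+1) mu j
       <= \sum_(l <= j < r.+1) lam j
         - \sum_(l <= j < r.+1) w j / (\sum_(l <= i < n.+1) w i) * (lam j - lam r.+1)).
Proof.
move=> n2 hlam hw hsum.
pose d := [seq (lam i, w i) | i <- iota 1 n].
have ld : lams d = map lam (iota 1 n) by rewrite /lams -map_comp.
have hPd : Pr d = interlace_poly n lam w.
  rewrite -bridge; apply: Pr_perm.
  by rewrite /d map_rev perm_sym perm_rev perm_refl.
have swd : sw d = 1.
  by rewrite /sw big_map -hsum /index_iota subn1.
have hw' : forall x, x \in d -> 0 <= x.2.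
  move=> x /mapP[i]; rewrite mem_iota => /andP[i1 i2] ->; apply: hw => //.
have sw0 : 0 < sw d by rewrite swd ltr01.
have [mu rmu] := @exists_roots R (size d) d erefl hw' sw0.
have sizemu : size mu = n.-1 by case: rmu => -> _ _; rewrite size_map size_iota.
pose smu := sort geR mu.
have ssm : size smu = n.-1 by rewrite size_sort.
have tot : total (@geR R) by move=> x y; rewrite /geR le_total.
have srt : sorted geR smu := sort_sorted tot mu.
have pm : perm_eq smu mu by rewrite perm_sort perm_refl.
have hlam' : forall i j, (1 <= i)%N -> (i <= j)%N -> (j < 1 + n)%N -> lam j <= lam i.
  by move=> i j i1 ij; rewrite add1n ltnS; apply: hlam.
have sl : sorted geR (map lam (iota 1 n)) by apply: sorted_map_iota.
have nls : forall k, (k < n)%N -> nth 0 (map lam (iota 1 n)) k = lam k.+1.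
  by move=> k kn; rewrite (nth_map 0) ?size_iota // nth_iota // add1n.
have IL : forall k, (k < n.-1)%N -> lam k.+2 <= nth 0 smu k <= lam k.+1.
  move=> k kn.
  have [s1 _ s2] := rmu.
  have c1 : size mu = (size (map lam (iota 1 n))).-1 by rewrite size_map size_iota.
  have c2 : forall t, (cge t mu <= cge t (map lam (iota 1 n)))%N /\
     (cgt t (map lam (iota 1 n)) <= (cgt t mu).+1)%N by move=> t; rewrite -ld; exact: s2 t.
  have := @sorted_interlace R _ mu c1 c2 sl k; rewrite sizemu => /(_ kn).
  have kn' : (k.+1 < n)%N by rewrite -ltn_predRL.
  by rewrite -/smu !nls // (ltn_trans _ kn').
exists (fun j => nth 0 smu j.-1); split.
  move=> i j i1 ij jn.
  apply: (sorted_leq_nth (leT := geR)) => //.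
  - by move=> x y z; rewrite /geR => h1 h2; apply: le_trans h2 h1.
  - by move=> x; rewrite /geR.
  - by rewrite inE ssm; lia.
  - by rewrite inE ssm; lia.
  - by rewrite -!subn1 leq_sub2r.
split.
  have pm' : perm_eq mu smu by rewrite perm_sym.
  rewrite -hPd; case: rmu => _ -> _; rewrite swd scale1r (perm_big _ pm') (big_nth 0) ssm.
  by rewrite (big_add1 _ _ 0).
move=> l r l1 lr rn Un Ln.
have n1 : (1 < n)%N by [].
have rn' : (r < n)%N by apply: (leq_ltn_trans rn); rewrite ltn_predL (ltn_trans _ n2).
pose m := (r.+1 - l)%N.
have mE : (l + m = r.+1)%N by rewrite subnKC // ltnW.
have hfd : forall t, fv d t = \sum_(1 <= i < n.+1) w i / (t - lam i).
  by move=> t; rewrite /fv big_map /index_iota subn1.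
have cutd : forall k t, (k < m)%N -> lam (k + l).+1 < t < lam (k + l) ->
    cgt t (lams d) = (k + l)%N /\ t \notin lams d.
  move=> k t km ht; rewrite ld; have := @cut_lemma R lam 1 n (k + l) t hlam'.
  rewrite subSS subn0; apply => //; first by rewrite addn_gt0 l1 orbT.
  by rewrite add1n ltnS; rewrite /m in km; lia.
have sumL : forall k, (k < m)%N -> ((k + l).-1 < n.-1)%N.
  move=> k km; rewrite /m in km; lia.
have ILk : forall k, (k < m)%N ->
    lam (k + l).+1 <= nth 0 smu (k + l).-1 <= lam (k + l).
  move=> k km; have := IL _ (sumL k km).
  by rewrite prednK // addn_gt0 l1 orbT.
pose U := \sum_(l <= i < n.+1) w i.
pose W := \sum_(r.+1 <= i < n.+1) w i.
have UW : U = \sum_(l <= i < r.+1) w i + W.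
  by rewrite /U /W (big_cat_nat _ (n := r.+1)) //= ltnW.
have W0 : 0 <= W.
  rewrite /W big_nat_cond; apply: sumr_ge0 => i /andP[/andP[i1 i2] _]; apply: hw.
    by apply: leq_trans i1.
  by rewrite -ltnS.
pose ds := [seq (lam i, w i) | i <- index_iota l r.+1] ++ [:: (lam r.+1, W)].
have lds : lams ds = map lam (iota l m.+1).
  by rewrite /lams map_cat -map_comp -(addn1 m) iotaD mE map_cat.
have sds : sw ds = U by rewrite /sw big_cat big_map big_seq1 UW.
have U0 : 0 < U.
  rewrite lt_def Un /U big_nat_cond; apply: sumr_ge0 => i /andP[/andP[i1 i2] _]; apply: hw.
    by apply: leq_trans i1.
  by rewrite -ltnS.
have hwds : forall x, x \in ds -> 0 <= x.2.
  move=> x; rewrite mem_cat inE => /orP[/mapP[i]|/eqP -> //].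
  rewrite mem_iota => /andP[i1 i2] ->; apply: hw; first by apply: leq_trans i1.
  by move: i2; rewrite subnKC; [rewrite ltnS => /leq_trans; apply; apply: ltnW | apply: ltnW].
have sds0 : 0 < sw ds by rewrite sds.
have [nu rnu] := @exists_roots R (size ds) ds erefl hwds sds0.
have sizeds : size ds = m.+1 by rewrite -(size_map fst) -/(lams ds) lds size_map size_iota.
have sizenu : size nu = m by case: rnu => -> _ _; rewrite sizeds.
pose snu := sort geR nu.
have ssn : size snu = m by rewrite size_sort.
have srtn : sorted geR snu := sort_sorted tot nu.
have pn : perm_eq snu nu by rewrite perm_sort perm_refl.
have hlamds : forall i j, (l <= i)%N -> (i <= j)%N -> (j < l + m.+1)%N -> lam j <= lam i.
  by move=> i j li ij; rewrite addnS mE ltnS => jr; apply: hlam => //; [apply: leq_trans li | apply: leq_trans rn'].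
have sln : sorted geR (map lam (iota l m.+1)) by apply: sorted_map_iota.
have ILn : forall k, (k < m)%N -> lam (k + l).+1 <= nth 0 snu k <= lam (k + l).
  move=> k km.
  have [s1 _ s2] := rnu.
  have c1 : size nu = (size (map lam (iota l m.+1))).-1 by rewrite size_map size_iota.
  have c2 : forall t, (cge t nu <= cge t (map lam (iota l m.+1)))%N /\
     (cgt t (map lam (iota l m.+1)) <= (cgt t nu).+1)%N by move=> t; rewrite -lds; exact: s2 t.
  have := @sorted_interlace R _ nu c1 c2 sln k; rewrite sizenu => /(_ km).
  rewrite -/snu !(nth_map 0) ?size_iota ?ltnS ?(ltnW km) //.
  by rewrite !nth_iota ?ltnS ?(ltnW km) // addnS (addnC l k).
have cutds : forall k t, (k < m)%N -> lam (k + l).+1 < t < lam (k + l) ->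
    cgt t (lams ds) = k.+1 /\ t \notin lams ds.
  move=> k t km ht; rewrite lds; have := @cut_lemma R lam l m.+1 (k + l) t hlamds.
  rewrite -addSn addnK; apply => //; first by rewrite leq_addl.
  by rewrite addnC ltn_add2l ltnS.
have fvle : forall k t, (k < m)%N -> lam (k + l).+1 < t < lam (k + l) -> fv d t <= fv ds t.
  move=> k t km /andP[t1 t2].
  have klr : (k + l <= r)%N by apply: ar1.
  have kl1 : (k + l < n)%N by apply: leq_ltn_trans rn'.
  rewrite hfd /fv big_cat big_map big_seq1 /=.
  have ln1 : (l <= n.+1)%N by apply: (leq_trans lr); apply: ltnW; apply: ltnW.
  rewrite (big_cat_nat _ (n := l) (m := 1) (p := n.+1)) //=.
  rewrite (big_cat_nat _ (n := r.+1) (m := l) (p := n.+1)) ?(leqW lr) ?ltnS ?(ltnW rn') //=.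
  rewrite -[X in _ <= X]add0r; apply: lerD; last apply: lerD => //.
    rewrite big_nat_cond; apply: sumr_le0 => i /andP[/andP[i1 i2] _].
    have iN : (i < n)%N := leq_trans i2 (leq_trans lr (ltnW rn')).
    apply: mulr_ge0_le0; first by apply: hw => //; apply: ltnW.
    rewrite invr_le0 subr_le0; apply: ltW; apply: (lt_le_trans t2); apply: hlam => //.
      by apply: (leq_trans (ltnW i2)); apply: leq_addl.
    exact: ltnW.
  have tr1 : lam r.+1 < t.
    by apply: le_lt_trans t1; apply: hlam => //; apply: ltnW.
  rewrite /W mulr_suml; apply: ler_sum_nat => i /andP[i1 i2].
  have ti : lam i < t.
    apply: le_lt_trans tr1; apply: hlam => //; rewrite -ltnS.
  apply: ler_wpM2l; first by apply: hw; [apply: leq_trans i1 | rewrite -ltnS].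
  rewrite lef_pV2 ?posrE ?subr_gt0 // lerD2l lerN2; apply: hlam => //; rewrite -ltnS.
have claimU : forall k, (k < m)%N -> nth 0 smu (k + l).-1 <= nth 0 snu k.
  move=> k km; rewrite leNgt; apply/negP => h.
  have [h1 h2] := midf_lt h.
  set t := (_ + _) / 2 in h1 h2.
  have [IL1 IL2] := andP (ILk k km).
  have [IN1 IN2] := andP (ILn k km).
  have ht : lam (k + l).+1 < t < lam (k + l).
    by rewrite (le_lt_trans IN1 h1) (lt_le_trans h2 IL2).
  have [Kd td] := cutd k t km ht.
  have [Kds tds] := cutds k t km ht.
  have cmp := compare sw0 sds0 rmu rnu td tds (fvle k t km ht).
  have N1 : ((k + l).-1 < cgt t mu)%N.
    rewrite /cgt -(permP pm); apply: (A_gen (P := fun x => t < x)) => //.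
    - by move=> x y xy tx; apply: lt_le_trans xy.
    - by rewrite ssm; apply: sumL.
  have N2 : (cgt t nu <= k)%N.
    rewrite /cgt -(permP pn); apply: (B_gen (P := fun x => t < x)) => //.
    - by move=> x y xy tx; apply: lt_le_trans xy.
    - by rewrite /= -leNgt ltW.
  rewrite Kd Kds in cmp.
  exact: (ar2 l1 N1 N2 cmp).
have UBsum : \sum_(l <= j < r.+1) nth 0 smu j.-1 <= \sum_(z <- lams ds) z - (\sum_(x <- ds) x.2 * x.1) / sw ds.
  rewrite -(sum_roots sds0 rnu); last by rewrite sizeds; apply: ar3.
  rewrite -(perm_big _ pn) [X in _ <= X](big_nth 0) ssn -{1}(add0n l) big_addn -/m.
  by apply: ler_sum_nat => k /andP[_ km]; apply: claimU.
have Ualg : \sum_(z <- lams ds) z - (\sum_(x <- ds) x.2 * x.1) / sw ds =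
    \sum_(l <= j < r.+1) lam j - \sum_(l <= j < r.+1) w j / U * (lam j - lam r.+1).
  rewrite sds /lams map_cat -map_comp !big_cat !big_map !big_seq1 /=.
  have -> : \sum_(l <= j < r.+1) w j / U * (lam j - lam r.+1) =
      (\sum_(l <= j < r.+1) w j * lam j - (\sum_(l <= j < r.+1) w j) * lam r.+1) / U.
    rewrite mulr_suml -sumrB mulr_suml; apply: eq_bigr => j _; ring.
  have U0' : U != 0 by rewrite gt_eqF.
  move: U0'; rewrite UW => U0'; field.
  done.
pose L' := \sum_(1 <= i < l.+1) w i.
pose Lt := \sum_(1 <= i < r.+2) w i.
have LL : Lt = L' + \sum_(l.+1 <= i < r.+2) w i.
  by rewrite /Lt /L' (big_cat_nat _ (n := l.+1)) //= ltnS ltnW.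
have L'0 : 0 <= L'.
  rewrite /L' big_nat_cond; apply: sumr_ge0 => i /andP[/andP[i1 i2] _]; apply: hw => //.
  by rewrite ltnS in i2; apply: (leq_trans i2); apply: (leq_trans lr); apply: ltnW.
pose ds2 := (lam l, L') :: [seq (lam i, w i) | i <- index_iota l.+1 r.+2].
have lds2 : lams ds2 = map lam (iota l m.+1).
  by rewrite /lams /= -map_comp /index_iota subSS.
have sds2 : sw ds2 = Lt by rewrite /sw big_cons big_map LL.
have Lt0 : 0 < Lt.
  rewrite lt_def Ln /Lt big_nat_cond; apply: sumr_ge0 => i /andP[/andP[i1 i2] _]; apply: hw => //.
  by rewrite -ltnS (leq_trans i2).
have hwds2 : forall x, x \in ds2 -> 0 <= x.2.
  move=> x; rewrite inE => /orP[/eqP -> //|/mapP[i]].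
  rewrite mem_iota => /andP[i1 i2] ->; apply: hw; first by apply: leq_trans i1.
  move: i2; rewrite subnKC ?ltnS //; last by apply: ltnW.
  by move=> /leq_trans; apply.
have sds20 : 0 < sw ds2 by rewrite sds2.
have [rho rrho] := @exists_roots R (size ds2) ds2 erefl hwds2 sds20.
have sizeds2 : size ds2 = m.+1 by rewrite -(size_map fst) -/(lams ds2) lds2 size_map size_iota.
have sizerho : size rho = m by case: rrho => -> _ _; rewrite sizeds2.
pose srho := sort geR rho.
have ssr : size srho = m by rewrite size_sort.
have pr : perm_eq srho rho by rewrite perm_sort perm_refl.
have srtr : sorted geR srho := sort_sorted tot rho.
have ILr : forall k, (k < m)%N -> lam (k + l).+1 <= nth 0 srho k <= lam (k + l).
  move=> k km.
  have [s1 _ s2] := rrho.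
  have c1 : size rho = (size (map lam (iota l m.+1))).-1 by rewrite size_map size_iota.
  have c2 : forall t, (cge t rho <= cge t (map lam (iota l m.+1)))%N /\
     (cgt t (map lam (iota l m.+1)) <= (cgt t rho).+1)%N by move=> t; rewrite -lds2; exact: s2 t.
  have := @sorted_interlace R _ rho c1 c2 sln k; rewrite sizerho => /(_ km).
  rewrite -/srho !(nth_map 0) ?size_iota ?ltnS ?(ltnW km) //.
  by rewrite !nth_iota ?ltnS ?(ltnW km) // addnS (addnC l k).
have cutds2 : forall k t, (k < m)%N -> lam (k + l).+1 < t < lam (k + l) ->
    cgt t (lams ds2) = k.+1 /\ t \notin lams ds2.
  by move=> k t km ht; rewrite lds2 -lds; apply: cutds.
have fvle2 : forall k t, (k < m)%N -> lam (k + l).+1 < t < lam (k + l) -> fv ds2 t <= fv d t.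
  move=> k t km /andP[t1 t2].
  have klr : (k + l <= r)%N by apply: ar1.
  have kl1 : (k + l < n)%N by apply: leq_ltn_trans rn'.
  rewrite hfd /fv big_cons big_map /=.
  have ln1 : (l.+1 <= n.+1)%N by rewrite ltnS; apply: (leq_trans lr); apply: ltnW.
  rewrite (big_cat_nat _ (n := l.+1) (m := 1) (p := n.+1)) //=.
  rewrite (big_cat_nat _ (n := r.+2) (m := l.+1) (p := n.+1)) ?ltnS ?(leqW lr) //=.
  apply: lerD; last first.
    rewrite lerDl big_nat_cond; apply: sumr_ge0 => i /andP[/andP[i1 i2] _].
    have i1' : (1 <= i)%N by apply: leq_trans i1.
    have i2' : (i <= n)%N by rewrite -ltnS.
    apply: mulr_ge0; first by apply: hw.
    rewrite invr_ge0 subr_ge0; apply: ltW; apply: le_lt_trans t1; apply: hlam => //.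
    by apply: leq_ltn_trans (ltnW i1); apply: (leq_trans klr).
  have tl : t < lam l by apply: (lt_le_trans t2); apply: hlam => //; [apply: leq_addl | apply: ltnW].
  rewrite /L' mulr_suml; apply: ler_sum_nat => i /andP[i1 i2].
  rewrite ltnS in i2.
  have li : lam l <= lam i by apply: hlam => //; apply: (leq_trans lr); apply: ltnW.
  apply: ler_wpM2l; first by apply: hw => //; apply: (leq_trans i2); apply: (leq_trans lr); apply: ltnW.
  rewrite lef_nV2 ?negrE ?subr_lt0 //; last by apply: lt_le_trans li.
  by rewrite lerD2l lerN2.
have claimL : forall k, (k < m)%N -> nth 0 srho k <= nth 0 smu (k + l).-1.
  move=> k km; rewrite leNgt; apply/negP => h.
  have [h1 h2] := midf_lt h.
  set t := (_ + _) / 2 in h1 h2.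
  have [IL1 IL2] := andP (ILk k km).
  have [IN1 IN2] := andP (ILr k km).
  have ht : lam (k + l).+1 < t < lam (k + l).
    by rewrite (le_lt_trans IL1 h1) (lt_le_trans h2 IN2).
  have [Kd td] := cutd k t km ht.
  have [Kds tds] := cutds2 k t km ht.
  have cmp := compare sds20 sw0 rrho rmu tds td (fvle2 k t km ht).
  have N1 : (k < cgt t rho)%N.
    rewrite /cgt -(permP pr); apply: (A_gen (P := fun x => t < x)) => //.
    - by move=> x y xy tx; apply: lt_le_trans xy.
    - by rewrite ssr.
  have N2 : (cgt t mu <= (k + l).-1)%N.
    rewrite /cgt -(permP pm); apply: (B_gen (P := fun x => t < x)) => //.
    - by move=> x y xy tx; apply: lt_le_trans xy.
    - by rewrite /= -leNgt ltW.
  rewrite Kd Kds in cmp.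
  exact: (ar4 l1 N1 N2 cmp).
have LBsum : \sum_(z <- lams ds2) z - (\sum_(x <- ds2) x.2 * x.1) / sw ds2 <=
    \sum_(l <= j < r.+1) nth 0 smu j.-1.
  rewrite -(sum_roots sds20 rrho); last by rewrite sizeds2; apply: ar3.
  rewrite -(perm_big _ pr) [X in X <= _](big_nth 0) ssr -{1}(add0n l) big_addn -/m.
  by apply: ler_sum_nat => k /andP[_ km]; apply: claimL.
have sh : forall F : nat -> R, \sum_(l <= j < r.+1) F j.+1 = \sum_(l.+1 <= i < r.+2) F i.
  by move=> F; rewrite big_add1.
have Lalg : \sum_(z <- lams ds2) z - (\sum_(x <- ds2) x.2 * x.1) / sw ds2 =
    \sum_(l <= j < r.+1) lam j.+1
      + \sum_(l <= j < r.+1) w j.+1 / Lt * (lam l - lam j.+1).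
  rewrite (sh lam) (sh (fun i => w i / Lt * (lam l - lam i))).
  rewrite sds2 /lams /= -map_comp !big_cons !big_map /=.
  have -> : \sum_(l.+1 <= i < r.+2) w i / Lt * (lam l - lam i) =
      ((\sum_(l.+1 <= i < r.+2) w i) * lam l - \sum_(l.+1 <= i < r.+2) w i * lam i) / Lt.
    rewrite mulr_suml -sumrB mulr_suml; apply: eq_bigr => j _; ring.
  have L0' : Lt != 0 by rewrite gt_eqF.
  move: L0'; rewrite LL => L0'; field.
  done.
rewrite -/Lt -/U; split.
  by rewrite -Lalg; exact: LBsum.
by rewrite -Ualg; exact: UBsum.
Qed.

Unset Implicit Arguments.
Set Strict Implicit.
Theorem theorem2p2 (R : realType) (n : nat) (lam w : nat -> R) :
  (2 <= n)%N ->
  (forall i j : nat, (1 <= i)%N -> (i <= j)%N -> (j <= n)%N -> lam j <= lam i) ->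
  (forall i : nat, (1 <= i)%N -> (i <= n)%N -> 0 <= w i) ->
  \sum_(1 <= i < n.+1) w i = 1 ->
  exists mu : nat -> R,
    (forall i j : nat, (1 <= i)%N -> (i <= j)%N -> (j <= n.-1)%N -> mu j <= mu i) /\
    interlace_poly n lam w = \prod_(1 <= j < n) ('X - (mu j)%:P) /\
    (forall l r : nat, (1 <= l)%N -> (l <= r)%N -> (r <= n.-1)%N ->
       \sum_(l <= i < n.+1) w i != 0 ->
       \sum_(1 <= i < r.+2) w i != 0 ->
       \sum_(l <= j < r.+1) lam j.+1
         + \sum_(l <= j < r.+1) w j.+1 / (\sum_(1 <= i < r.+2) w i) * (lam l - lam j.+1)
       <= \sum_(l <= j < r.+1) mu j
       /\
       \sum_(l <= j < r.+1) mu j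
       <= \sum_(l <= j < r.+1) lam j
         - \sum_(l <= j < r.+1) w j / (\sum_(l <= i < n.+1) w i) * (lam j - lam r.+1)).
Proof. exact: main. Qed.
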